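(* Let $F:[0,\infty)\to\mathbb{R}$ be $C^{1,1}$ with $F'(0)=0$ and set $M:=\max\{1,\limsup_{t\downarrow0}|F'(t)|/t\}$. There exist $T>0$, $L=L(M)>1$ (depending only on $M$), and an $L$-bi-Lipschitz map $G:B^2(0,T)\to B^2(0,T)$ with $G(0)=0$ such that for each $s\in\mathbb{S}^1$ the curve $t\mapsto(G(ts),F(|G(ts)|))$ is horizontal. Moreover, $|G(st)|=|G(s't)|$ for any $s,s'\in\mathbb{S}^1$ and $t\in[0,T)$.
   Context: $B^2(0,T)$ is the open Euclidean disc of radius $T$ centred at the origin of $\mathbb{R}^2$, with the Euclidean metric; $\mathbb{S}^1$ is the unit circle. An absolutely continuous curve $(x(t),y(t),z(t))$ in $\mathbb{R}^3$ is horizontal if $z'+\tfrac12x'y-\tfrac12xy'=0$ almost everywhere. $G$ is $L$-bi-Lipschitz if $L^{-1}|a-b|\le|G(a)-G(b)|\le L|a-b|$. *)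

(* Defs.v *)
From HB Require Import structures.
From mathcomp Require Import all_boot all_order all_algebra.
From mathcomp Require Import all_classical all_reals all_analysis.
Set Implicit Arguments. Unset Strict Implicit. Unset Printing Implicit Defensive.
Import Order.TTheory GRing.Theory Num.Theory.
Import numFieldNormedType.Exports.
Local Open Scope classical_set_scope.
Local Open Scope ring_scope.

Section defs.
Variable R : realType.

Definition norm2 (p : R * R) : R := Num.sqrt (p.1 ^+ 2 + p.2 ^+ 2).

Definition smul2 (t : R) (s : R * R) : R * R := (t * s.1, t * s.2).

Definition sub2 (p q : R * R) : R * R := (p.1 - q.1, p.2 - q.2).

Definition is_derive_halfline (F F' : R -> R) : Prop :=
  forall x : R, 0 <= x ->
    (fun h : R => (F (x + h) - F x) / h) @ within (fun h : R => 0 <= x + h) (0 : R)^'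
      --> F' x.

Definition C11_halfline (F F' : R -> R) : Prop :=
  is_derive_halfline F F' /\
  exists K : R, forall x y : R, 0 <= x -> 0 <= y -> `|F' x - F' y| <= K * `|x - y|.

Definition abs_cont_on (f : R -> R) (a b : R) : Prop :=
  forall eps : R, 0 < eps -> exists2 delta : R, 0 < delta &
    forall (n : nat) (u v : nat -> R),
      (forall i, (i < n)%N -> a <= u i /\ u i <= v i /\ v i <= b) ->
      (forall i, (i.+1 < n)%N -> v i <= u i.+1) ->
      \sum_(i < n) (v i - u i) < delta ->
      \sum_(i < n) `|f (v i) - f (u i)| < eps.

Definition horizontal_on (x y z : R -> R) (T : R) : Prop :=
  (forall b : R, 0 <= b -> b < T ->
     [/\ abs_cont_on x 0 b, abs_cont_on y 0 b & abs_cont_on z 0 b]) /\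
  exists N : set R, (@lebesgue_measure R).-negligible N /\
    forall t : R, 0 < t -> t < T -> ~ N t ->
      [/\ derivable x t 1, derivable y t 1, derivable z t 1 &
          derive1 z t + 2^-1 * derive1 x t * y t - 2^-1 * x t * derive1 y t = 0].

End defs.

(* Main.v *)
Require Import Defs.
From HB Require Import structures.
From mathcomp Require Import all_boot all_order all_algebra.
From mathcomp Require Import all_classical all_reals all_analysis.
From mathcomp Require Import ring lra.
Import Order.TTheory GRing.Theory Num.Theory.
Import numFieldNormedType.Exports.
Local Open Scope classical_set_scope.
Local Open Scope ring_scope.
Set Implicit Arguments. Unset Strict Implicit.

Section S0.
Variable R : realType.
Implicit Types (p q : R * R) (a : R).

Definition rot a p : R * R := (cos a * p.1 - sin a * p.2, sin a * p.1 + cos a * p.2).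

Lemma sqrt_le_mul (X Y c : R) : 0 <= c -> 0 <= Y -> X <= c ^+ 2 * Y -> Num.sqrt X <= c * Num.sqrt Y.
Proof.
move=> c0 Y0 XY.
rewrite -(ger0_norm c0) -sqrtr_sqr -sqrtrM ?sqr_ge0 //.
by apply: ler_wsqrtr.
Qed.

Lemma norm2_rot a p : norm2 (rot a p) = norm2 p.
Proof.
rewrite /norm2 /rot /=; congr Num.sqrt.
have h := cos2Dsin2 a.
rewrite -[RHS]mul1r -h; ring.
Qed.

Lemma rotK a p : rot (- a) (rot a p) = p.
Proof.
rewrite /rot /= cosN sinN; have h := cos2Dsin2 a.
case: p => p1 p2 /=; congr pair.
  by rewrite -[RHS]mul1r -h; ring.
by rewrite -[RHS]mul1r -h; ring.
Qed.

Lemma rot0 a : rot a (0, 0) = (0, 0).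
Proof. by rewrite /rot /= !mulr0 subrr addr0. Qed.

Lemma norm2_ge0 p : 0 <= norm2 p.
Proof. exact: sqrtr_ge0. Qed.

Lemma norm2_sqr p : norm2 p ^+ 2 = p.1 ^+ 2 + p.2 ^+ 2.
Proof. by rewrite /norm2 sqr_sqrtr // addr_ge0 // sqr_ge0. Qed.

Lemma norm2_smul (t : R) (s : R * R) : norm2 s = 1 -> norm2 (smul2 t s) = `|t|.
Proof.
move=> hs; rewrite /norm2 /smul2 /= !exprMn -mulrDr sqrtrM ?sqr_ge0 //.
by rewrite sqrtr_sqr -/(norm2 s) hs mulr1.
Qed.

Lemma norm2_subC p q : norm2 (sub2 p q) = norm2 (sub2 q p).
Proof. by rewrite /norm2 /sub2 /=; congr Num.sqrt; ring. Qed.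

Lemma norm2_tri p q : norm2 q <= norm2 p + norm2 (sub2 q p).
Proof.
have h1 := norm2_sqr p; have h2 := norm2_sqr q; have h3 := norm2_sqr (sub2 q p).
have g1 := norm2_ge0 p; have g2 := norm2_ge0 q; have g3 := norm2_ge0 (sub2 q p).
move: h1 h2 h3 g1 g2 g3; rewrite /sub2 /=.
set r := norm2 p; set s := norm2 q; set d := norm2 _.
case: p q {r s d} => [p1 p2] [q1 q2] /= in r s d * => h1 h2 h3 g1 g2 g3.
have sq_le (x y : R) : 0 <= y -> x ^+ 2 <= y ^+ 2 -> x <= y by move=> *; nra.
have cs : p1 * (q1 - p1) + p2 * (q2 - p2) <= r * d.
  apply: sq_le; first exact: mulr_ge0.
  have e : (r * d) ^+ 2 - (p1 * (q1 - p1) + p2 * (q2 - p2)) ^+ 2 = (p1 * (q2 - p2) - p2 * (q1 - p1)) ^+ 2.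
    by rewrite exprMn h1 h3; ring.
  have := sqr_ge0 (p1 * (q2 - p2) - p2 * (q1 - p1)); rewrite -e; lra.
apply: sq_le; first lra.
have e : (r + d) ^+ 2 - s ^+ 2 = 2 * (r * d - (p1 * (q1 - p1) + p2 * (q2 - p2))).
  by rewrite sqrrD h1 h2 h3; ring.
lra.
Qed.

Lemma cos_lip a b : `|cos a - cos b| <= `|a - b|.
Proof.
wlog ab : a b / a <= b => [hw|].
  by case/orP: (le_total a b) => h; [|rewrite distrC [`|a - b|]distrC]; apply: hw.
rewrite distrC [`|a - b|]distrC.
have [c _ ->] := @MVT_segment R cos (fun x => - sin x) a b ab
  (fun x _ => is_derive_cos x) (continuous_subspaceT (@continuous_cos R)).
rewrite normrM.
by rewrite -[X in _ <= X]mul1r ler_wpM2r // normrN sin_max.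
Qed.

Lemma sin_lip a b : `|sin a - sin b| <= `|a - b|.
Proof.
wlog ab : a b / a <= b => [hw|].
  by case/orP: (le_total a b) => h; [|rewrite distrC [`|a - b|]distrC]; apply: hw.
rewrite distrC [`|a - b|]distrC.
have [c _ ->] := @MVT_segment R sin cos a b ab
  (fun x _ => is_derive_sin x) (continuous_subspaceT (@continuous_sin R)).
rewrite normrM.
by rewrite -[X in _ <= X]mul1r ler_wpM2r // cos_max.
Qed.

Lemma rot_lip (phi : R -> R) (C T : R) : 0 <= C ->
  (forall r s, 0 < r -> r <= s -> s < T -> `|phi s - phi r| <= C * (s - r) / r) ->
  forall p q, norm2 p < T -> norm2 q < T ->
  norm2 (sub2 (rot (phi (norm2 p)) p) (rot (phi (norm2 q)) q)) <= (2 * C + 2) * norm2 (sub2 p q).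
Proof.
move=> C0 hphi p q.
wlog pq : p q / norm2 p <= norm2 q => [hw|].
  case/orP: (le_total (norm2 p) (norm2 q)) => h hp hq; first exact: hw.
  by rewrite norm2_subC [norm2 (sub2 p q)]norm2_subC; apply: hw.
move=> hp hq.
have tri := norm2_tri p q; rewrite norm2_subC in tri.
have hr := norm2_sqr p; have hd := norm2_sqr (sub2 p q).
have r0 := norm2_ge0 p; have d0 := norm2_ge0 (sub2 p q).
set r := norm2 p in pq hp tri hr r0 *; set s := norm2 q in pq hq tri *.
set d := norm2 (sub2 p q) in tri hd d0 *.
set al := phi r; set be := phi s.
have key : r * `|al - be| <= C * d.
  have [->|rpos] := eqVneq r 0; first by rewrite mul0r mulr_ge0.
  have rp : 0 < r by rewrite lt_def rpos r0.
  have := hphi r s rp pq hq; rewrite -/al -/be distrC => h.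
  apply: (le_trans (y := C * (s - r))); last by apply: ler_wpM2l => //; lra.
  by rewrite mulrC -ler_pdivlMr // mulrAC.
have hu := cos_lip al be; have hv := sin_lip al be.
have cs := cos2Dsin2 be.
rewrite /norm2; apply: sqrt_le_mul; first lra.
  by rewrite addr_ge0 // sqr_ge0.
move: hr hd; rewrite /rot /sub2 /=.
set u := cos al - cos be; set v := sin al - sin be.
set e1 := p.1 - q.1; set e2 := p.2 - q.2.
set del := `|al - be|.
move=> hr hd.
have E1 : cos al * p.1 - sin al * p.2 - (cos be * q.1 - sin be * q.2)
   = (u * p.1 - v * p.2) + (cos be * e1 - sin be * e2) by rewrite /u /v /e1 /e2; ring.
have E2 : sin al * p.1 + cos al * p.2 - (sin be * q.1 + cos be * q.2)
   = (v * p.1 + u * p.2) + (sin be * e1 + cos be * e2) by rewrite /u /v /e1 /e2; ring.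
rewrite E1 E2 -/e1 -/e2.
have ab2 (A B : R) : (A + B) ^+ 2 <= 2 * A ^+ 2 + 2 * B ^+ 2.
  have := sqr_ge0 (A - B); nra.
have F1 : (u * p.1 - v * p.2) ^+ 2 + (v * p.1 + u * p.2) ^+ 2 = (u ^+ 2 + v ^+ 2) * r ^+ 2.
  by rewrite hr; ring.
have F2 : (cos be * e1 - sin be * e2) ^+ 2 + (sin be * e1 + cos be * e2) ^+ 2 = d ^+ 2.
  by rewrite hd -[RHS]mul1r -cs; ring.
have del0 : 0 <= del by apply: normr_ge0.
have sq_abs (x y : R) : `|x| <= y -> x ^+ 2 <= y ^+ 2.
  move=> h; rewrite -[x ^+ 2]real_normK ?num_real //; have := normr_ge0 x; nra.
have U : u ^+ 2 <= del ^+ 2 by apply: sq_abs.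
have V : v ^+ 2 <= del ^+ 2 by apply: sq_abs.
have K2 : (r * del) ^+ 2 <= (C * d) ^+ 2.
  have sq2 (x y : R) : 0 <= x -> x <= y -> x ^+ 2 <= y ^+ 2 by move=> *; nra.
  by apply: sq2 => //; apply: mulr_ge0.
have := ab2 (u * p.1 - v * p.2) (cos be * e1 - sin be * e2).
have := ab2 (v * p.1 + u * p.2) (sin be * e1 + cos be * e2).
have W : (u ^+ 2 + v ^+ 2) * r ^+ 2 <= 2 * (C * d) ^+ 2.
  apply: (le_trans (y := 2 * (r * del) ^+ 2)); last lra.
  rewrite exprMn; have := sqr_ge0 r; nra.
rewrite -hd; have := sqr_ge0 d; have := sqr_ge0 C; rewrite !exprMn in W *.
nra.
Qed.
End S0.


Section S1.
Variable R : realType.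

Lemma within_drop {T : Type} {U : topologicalType} {F : set_system T} {FF : Filter F}
  {D : set T} {f : T -> U} {l : U} :
  (\forall x \near F, D x) -> f @ within D F --> l -> f @ F --> l.
Proof.
move=> hD hf A /hf; rewrite /= /within /= => H.
by apply: (filterS2 _ _ hD H) => x Dx; apply.
Qed.

Lemma halfline_is_derive {F F' : R -> R} {x : R} :
  is_derive_halfline F F' -> 0 < x -> is_derive x 1 F (F' x).
Proof.
move=> hF x0.
have H : (fun h : R => h^-1 *: (F (h *: 1 + x) - F x)) @ (0:R)^' --> F' x.
  have Hw := hF x (ltW x0).
  have D : \forall h \near (0:R)^', 0 <= x + h.
    apply: (@cvg_within _ (nbhs (0:R)) _ (fun h => h != 0)).
    exists x => // z /=; rewrite sub0r normrN ltr_norml => /andP[hz _]; lra.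
  apply: (cvg_trans _ (within_drop D Hw)); apply: near_eq_cvg; near=> h.
  by rewrite /= -[h%:A]/(h * 1) mulr1 [x + h]addrC mulrC.
apply: DeriveDef; first by apply/cvg_ex; exists (F' x).
by apply/cvg_lim.
Unshelve. all: by end_near. Qed.


Lemma halfline_cont0 {F F' : R -> R} :
  is_derive_halfline F F' -> F @ (0:R)^'+ --> F 0.
Proof.
move=> hF; have Hw := hF 0 (lexx 0).
have Hq : (fun h : R => (F (0 + h) - F 0) / h) @ (0:R)^'+ --> F' 0.
  apply: (cvg_trans _ Hw); apply: cvg_app.
  move=> A; rewrite /nbhs /= /at_right /dnbhs /within /= => H.
  move: H => /nbhs_ballP [e e0 He]; apply/nbhs_ballP; exists e => // h hb hpos.
  by apply: He => //; [rewrite gt_eqF | rewrite add0r ltW].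
have L : (fun h : R => F 0 + h * ((F (0 + h) - F 0) / h)) @ (0:R)^'+ --> F 0 + 0 * F' 0.
  apply: cvgD; first exact: cvg_cst.
  apply: cvgM => //; apply: cvg_at_right_filter; exact: cvg_id.
rewrite mul0r addr0 in L.
apply: (cvg_trans _ L); apply: near_eq_cvg; near=> h.
have hp : 0 < h by near: h; apply: nbhs_right_gt.
by rewrite add0r mulrC divfK ?gt_eqF // addrC subrK.
Unshelve. all: by end_near. Qed.

Lemma halfline_cont {F F' : R -> R} {x : R} :
  is_derive_halfline F F' -> 0 < x -> {for x, continuous F}.
Proof.
move=> hF x0; apply: differentiable_continuous; apply/derivable1_diffP.
by have [] := halfline_is_derive hF x0.
Qed.

Lemma F_lip (F F' : R -> R) (b B : R) : is_derive_halfline F F' ->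
  (forall x, 0 <= x -> x <= b -> `|F' x| <= B) ->
  forall u v, 0 <= u -> u <= v -> v <= b -> `|F v - F u| <= B * (v - u).
Proof.
move=> hF hB u v u0 uv vb.
have [<-|uv'] := eqVneq u v.
  rewrite !subrr normr0 mulr0 //.
have ltuv : u < v by rewrite lt_def eq_sym uv' uv.
have cont : {within `[u, v], continuous F}.
  have [u0'|upos] := eqVneq u 0.
    rewrite u0'; apply/continuous_within_itvP; first by rewrite -u0'.
    split.
    - move=> x; rewrite in_itv /= => /andP[x0 _]; exact: halfline_cont hF x0.
    - exact: halfline_cont0 hF.
    - apply: cvg_at_left_filter; apply: halfline_cont hF _; lra.
  have up : 0 < u by rewrite lt_def upos u0.
  apply: derivable_within_continuous => x; rewrite in_itv /= => /andP[ux _].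
  by have [] := halfline_is_derive hF (lt_le_trans up ux).
have hd : forall x, x \in `]u, v[ -> is_derive x 1 F (F' x).
  move=> x; rewrite in_itv /= => /andP[h1 h2]; apply: halfline_is_derive hF _; lra.
have [c cuv ->] := MVT_segment uv hd cont.
rewrite normrM (ger0_norm (x := v - u)); last by rewrite subr_ge0.
apply: ler_wpM2r; first by rewrite subr_ge0.
move: cuv; rewrite in_itv /= => /andP[h1 h2]; apply: hB; lra.
Qed.

Lemma lip_abs_cont (f : R -> R) (a b K : R) : 0 <= K ->
  (forall x y, a <= x -> x <= b -> a <= y -> y <= b -> `|f x - f y| <= K * `|x - y|) ->
  abs_cont_on f a b.
Proof.
move=> K0 hf eps e0; exists (eps / (K + 1)); first by apply: divr_gt0; lra.
move=> n u v huv _ hsum.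
apply: (le_lt_trans (y := K * \sum_(i < n) (v i - u i))).
  rewrite mulr_sumr; apply: ler_sum => i _.
  have [h1 [h2 h3]] := huv i (ltn_ord i).
  rewrite -(ger0_norm (x := v i - u i)); last by rewrite subr_ge0.
  apply: hf; lra.
apply: (le_lt_trans (y := K * (eps / (K + 1)))).
  by apply: ler_wpM2l => //; apply: ltW.
rewrite mulrA ltr_pdivrMr; last lra.
nra.
Qed.

Lemma limsup_bound (F' : R -> R) (K : R) :
  (forall x y, 0 <= x -> 0 <= y -> `|F' x - F' y| <= K * `|x - y|) -> F' 0 = 0 ->
  let M := maxe 1%E (limf_esup (fun t : R => (`|F' t| / t)%:E) (0 : R)^'+) in
  M \is a fin_num /\
  exists2 d : R, 0 < d & forall t, 0 < t -> t < d -> `|F' t| <= (fine M + 1) * t.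
Proof.
move=> hK F0 M.
set f := (fun t : R => (`|F' t| / t)%:E) in M *.
have ls_le : (limf_esup f (0:R)^'+ <= K%:E)%E.
  apply: (@le_trans _ _ (ereal_sup (f @` [set t | 0 < t]))).
    apply: ereal_inf_lbound; exists [set t : R | 0 < t] => //.
    exact: nbhs_right_gt.
  apply: ge_ereal_sup => _ [t /= tp <-]; rewrite lee_fin ler_pdivrMr //.
  have := hK t 0 (ltW tp) (lexx 0); rewrite F0 !subr0 (gtr0_norm tp).
  by rewrite mulrC.
have M1 : (1 <= M)%E by rewrite le_max lexx.
have Mfin : M \is a fin_num.
  rewrite ge0_fin_numE; last exact: le_trans M1.
  by rewrite /M gt_max ltry /= (le_lt_trans ls_le) // ltry.
split => //.
have : (limf_esup f (0:R)^'+ < (fine M + 1)%:E)%E.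
  apply: (le_lt_trans (y := M)); first by rewrite le_max lexx orbT.
  by rewrite -[X in (X < _)%E](fineK Mfin) lte_fin ltrDl ltr01.
rewrite /limf_esup => /ereal_inf_lt [_ [V FV <-]] hsup.
move: FV; rewrite /at_right /within /= => /nbhs_ballP [d d0 Hd].
exists d => // t tp td.
have Vt : V t.
  apply: Hd => //; rewrite /ball /= sub0r normrN gtr0_norm //.
have : (f t <= ereal_sup (f @` V))%E by apply: ereal_sup_ubound; exists t.
move=> /le_lt_trans /(_ hsup); rewrite lte_fin /f ltr_pdivrMr // => /ltW.
by rewrite mulrC.
Qed.
End S1.


Section S2.
Variable R : realType.

Lemma is_derive_compN {P : R -> R} {x d : R} :
  is_derive (- x) 1 P d -> is_derive x 1 (fun r => P (- r)) (- d).
Proof.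
move=> [dP DP].
have dN : derivable (@GRing.opp R) x 1 by have [] := is_deriveNid x (1:R).
have D1 : derivable (P \o (@GRing.opp R)) x 1.
  apply/derivable1_diffP; apply: differentiable_comp; apply/derivable1_diffP => //.
apply: DeriveDef => //; rewrite -derive1E derive1_comp //.
have := is_deriveNid x (1:R); move=> [_ DN].
rewrite !derive1E DP DN.
by rewrite mulrN1.
Qed.

Lemma cont_h (k : R -> R) (w : R) : continuous k -> w != 0 ->
  {for w, continuous (fun w : R => 2 * k (- w) / w ^+ 2)}.
Proof.
move=> kc w0.
apply: cvgM; first apply: cvgM.
- exact: cvg_cst.
- apply: continuous_comp; last exact: kc.
  exact: opp_continuous.
- apply: cvgV; first by rewrite expf_neq0.
  by rewrite expr2; apply: cvgM; exact: cvg_id.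
Qed.


Lemma theta_exists (k : R -> R) (T : R) : continuous k -> 0 < T ->
  exists th : R -> R, forall r, 0 < r -> r < T -> is_derive r 1 th (2 * k r / r ^+ 2).
Proof.
move=> kc T0.
pose h := fun w : R => 2 * k (- w) / w ^+ 2.
pose P := fun y : R => (\int[@lebesgue_measure R]_(t in [set` `[- T, y]]) h t)%R.
exists (fun r => - P (- r)) => r r0 rT.
have y0 : - r < - r / 2 by lra.
have hint : (@lebesgue_measure R).-integrable `[- T, - r / 2] (EFin \o h).
  apply: continuous_compact_integrable; first exact: segment_compact.
  apply: continuous_in_subspaceT => w; rewrite inE /= in_itv /= => /andP[_ hw].
  apply: cont_h => //; apply: ltr0_neq0; lra.
have [dP DP] := @continuous_FTC1_closed R h (- T) (- r) (- r / 2) y0 hint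
  ltac:(lra) (@cont_h k (- r) kc ltac:(by rewrite oppr_eq0 gt_eqF)).
have H1 : is_derive (- r) 1 P (h (- r)).
  by apply: DeriveDef => //; rewrite -derive1E.
have := is_deriveN (is_derive_compN H1).
by rewrite opprK /h opprK sqrrN.
Qed.
End S2.


Section S3.
Variable R : realType.

Lemma lip_cont (k : R -> R) (K : R) :
  (forall x y, `|k x - k y| <= K * `|x - y|) -> continuous k.
Proof.
move=> hk x; apply/cvgrPdist_le => e e0.
have K1 : 0 < `|K| + 1 by rewrite ltr_wpDl.
apply/nbhs_ballP; exists (e / (`|K| + 1)); first exact: divr_gt0.
move=> y /= hy; rewrite /ball /= in hy.
apply: (le_trans (hk x y)).
apply: (le_trans (y := `|K| * `|x - y|)); first by apply: ler_wpM2r; [exact: normr_ge0|exact: ler_norm].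
apply: (le_trans (y := `|K| * (e / (`|K| + 1)))).
  by apply: ler_wpM2l; [exact: normr_ge0| exact: ltW].
rewrite mulrA ler_pdivrMr //; have := normr_ge0 K; nra.
Qed.

Lemma is_derive_comp1 {f g : R -> R} {x df dg : R} :
  is_derive x 1 f df -> is_derive (f x) 1 g dg -> is_derive x 1 (fun u => g (f u)) (dg * df).
Proof.
move=> [df1 Df] [dg1 Dg].
have D1 : derivable (g \o f) x 1.
  apply/derivable1_diffP; apply: differentiable_comp; apply/derivable1_diffP => //.
apply: DeriveDef => //; rewrite -derive1E derive1_comp //.
by rewrite !derive1E Df Dg.
Qed.

Lemma abs_fst (p : R * R) : `|p.1| <= norm2 p.
Proof.
rewrite /norm2 -sqrtr_sqr; apply: ler_wsqrtr; rewrite lerDl; exact: sqr_ge0.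
Qed.

Lemma abs_snd (p : R * R) : `|p.2| <= norm2 p.
Proof.
rewrite /norm2 -sqrtr_sqr; apply: ler_wsqrtr; rewrite lerDr; exact: sqr_ge0.
Qed.

Lemma sub2_smul (x y : R) (s : R * R) : sub2 (smul2 x s) (smul2 y s) = smul2 (x - y) s.
Proof. by rewrite /sub2 /smul2 /=; congr pair; ring. Qed.

End S3.


Section S4.
Variable R : realType.
Lemma dl (t a : R) : is_derive t 1 (fun u : R => a * u) a.
Proof.
have := is_deriveZ a (is_derive_id t (1:R)).
by rewrite /GRing.scale /= mulr1.
Qed.
Lemma dprod (A B : R -> R) (t da db : R) : is_derive t 1 A da -> is_derive t 1 B db ->
  is_derive t 1 (fun u => A u * B u) (A t * db + B t * da).
Proof. move=> h1 h2; exact: is_deriveM. Qed.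
Lemma dsub (A B : R -> R) (t da db : R) : is_derive t 1 A da -> is_derive t 1 B db ->
  is_derive t 1 (fun u => A u - B u) (da - db).
Proof. move=> h1 h2; exact: is_deriveB. Qed.
Lemma dadd (A B : R -> R) (t da db : R) : is_derive t 1 A da -> is_derive t 1 B db ->
  is_derive t 1 (fun u => A u + B u) (da + db).
Proof. move=> h1 h2; exact: is_deriveD. Qed.
End S4.


Section S5.
Variable R : realType.

Lemma main :
  exists Lf : \bar R -> R,
  forall F F' : R -> R,
    C11_halfline F F' ->
    F' 0 = 0 ->
    let M : \bar R :=
      maxe 1%E (limf_esup (fun t : R => (`|F' t| / t)%:E) (0 : R)^'+) in
    let L := Lf M in
    1 < L /\
    exists T : R, 0 < T /\
    exists G : R * R -> R * R,
      [/\ (forall p, norm2 p < T -> norm2 (G p) < T),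
          (forall p q, norm2 p < T -> norm2 q < T ->
             L^-1 * norm2 (sub2 p q) <= norm2 (sub2 (G p) (G q)) /\
             norm2 (sub2 (G p) (G q)) <= L * norm2 (sub2 p q)),
          G (0, 0) = (0, 0),
          (forall s, norm2 s = 1 ->
             horizontal_on (fun t => (G (smul2 t s)).1) (fun t => (G (smul2 t s)).2)
                           (fun t => F (norm2 (G (smul2 t s)))) T) &
          (forall s s' t, norm2 s = 1 -> norm2 s' = 1 -> 0 <= t -> t < T ->
             norm2 (G (smul2 t s)) = norm2 (G (smul2 t s')))].
Proof.
exists (fun M => 4 * fine M + 6).
move=> F F' [hF [K hK]] F0 M L.
have K0 : 0 <= K.
  have := hK 1 0 ler01 (lexx 0); rewrite F0 !subr0 normr1 mulr1.
  by apply: le_trans; exact: normr_ge0.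
have [Mfin [d d0 hd]] := limsup_bound hK F0.
rewrite -/M in Mfin hd.
set m := fine M in hd L *.
have m0 : 0 <= m.
  apply: fine_ge0; apply: (@le_trans _ _ 1%E) => //; rewrite /M le_max lexx //.
set c := m + 1 in hd.
have c0 : 0 < c by rewrite /c; lra.
split; first by rewrite /L /=; lra.
exists d; split => //.
pose k := fun u : R => F' `|u|.
have kc : continuous k.
  apply: (@lip_cont R k K) => x y; rewrite /k.
  apply: (le_trans (hK _ _ (normr_ge0 _) (normr_ge0 _))).
  by apply: ler_wpM2l => //; exact: ler_dist_dist.
have [th hth] := theta_exists kc d0.
have th_lip : forall r s, 0 < r -> r <= s -> s < d ->
    `|th s - th r| <= (2 * c) * (s - r) / r.
  move=> r s r0 rs sd.
  have [<-|rs'] := eqVneq r s; first by rewrite !subrr normr0 mulr0 mul0r.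
  have cont : {within `[r, s], continuous th}.
    apply: derivable_within_continuous => x; rewrite in_itv /= => /andP[h1 h2].
    by have [] := hth x ltac:(lra) ltac:(lra).
  have hd2 : forall x, x \in `]r, s[ -> is_derive x 1 th (2 * k x / x ^+ 2).
    by move=> x; rewrite in_itv /= => /andP[h1 h2]; apply: hth; lra.
  have [xi xin ->] := MVT_segment rs hd2 cont.
  move: xin; rewrite in_itv /= => /andP[h1 h2].
  have xi0 : 0 < xi by lra.
  have kb : `|k xi| <= c * xi by rewrite /k (gtr0_norm xi0); apply: hd; lra.
  rewrite normrM (ger0_norm (x := s - r)); last by rewrite subr_ge0.
  rewrite normrM normrM normrV ?unitfE ?expf_neq0 ?gt_eqF // normrX (gtr0_norm xi0).
  rewrite ger0_norm //.
  have H : `|k xi| / xi ^+ 2 <= c / r.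
    rewrite ler_pdivrMr ?exprn_gt0 // mulrAC ler_pdivlMr //.
    have := normr_ge0 (k xi); rewrite expr2; nra.
  have e1 : 2 * `|k xi| / xi ^+ 2 * (s - r) = 2 * (`|k xi| / xi ^+ 2) * (s - r) by ring.
  have e2 : 2 * c * (s - r) / r = 2 * (c / r) * (s - r) by ring.
  rewrite e1 e2; have : 0 <= s - r by lra.
  move=> sr; nra.
pose G := fun p : R * R => rot (th (norm2 p)) p.
have Lval : L = 2 * (2 * c) + 2 by rewrite /L /c; ring.
have L0 : 0 < L by rewrite Lval; lra.
have up : forall p q, norm2 p < d -> norm2 q < d ->
    norm2 (sub2 (G p) (G q)) <= L * norm2 (sub2 p q).
  move=> p q hp hq; rewrite Lval.
  apply: (rot_lip (phi := th) (C := 2 * c) (T := d)) => //; lra.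
have GK : forall p, rot (- th (norm2 (G p))) (G p) = p.
  by move=> p; rewrite /G norm2_rot rotK.
have Gn : forall p, norm2 (G p) = norm2 p by move=> p; rewrite /G norm2_rot.
exists G; split.
- by move=> p hp; rewrite Gn.
- move=> p q hp hq; split; last exact: up.
  have hGp : norm2 (G p) < d by rewrite Gn.
  have hGq : norm2 (G q) < d by rewrite Gn.
  have := rot_lip (phi := fun r => - th r) (C := 2 * c) (T := d) ltac:(lra) _ hGp hGq.
  rewrite !GK -Lval => H.
  rewrite mulrC ler_pdivrMr // mulrC; apply: H.
  move=> r s r0 rs sd.
  have -> : - th s - - th r = - (th s - th r) by ring.
  by rewrite normrN; exact: th_lip.
- by rewrite /G rot0.
- move=> s hs.
  have hs2 : s.1 ^+ 2 + s.2 ^+ 2 = 1 by rewrite -norm2_sqr hs expr1n.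
  have Gsm : forall t, 0 <= t -> G (smul2 t s) = rot (th t) (smul2 t s).
    by move=> t t0; rewrite /G norm2_smul // ger0_norm.
  have Lip : forall x y, 0 <= x -> x < d -> 0 <= y -> y < d ->
      norm2 (sub2 (G (smul2 x s)) (G (smul2 y s))) <= L * `|x - y|.
    move=> x y x0 xd y0 yd; rewrite -(norm2_smul (x - y) hs) -sub2_smul.
    by apply: up; rewrite norm2_smul // ger0_norm.
  split.
  + move=> b b0 bd; split.
    * apply: (lip_abs_cont (K := L)); first lra.
      move=> x y h1 h2 h3 h4.
      have := abs_fst (sub2 (G (smul2 x s)) (G (smul2 y s))) => /= H.
      apply: (le_trans H); apply: Lip; lra.
    * apply: (lip_abs_cont (K := L)); first lra.
      move=> x y h1 h2 h3 h4.
      have := abs_snd (sub2 (G (smul2 x s)) (G (smul2 y s))) => /= H.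
      apply: (le_trans H); apply: Lip; lra.
    * apply: (lip_abs_cont (K := c * d)); first by apply: mulr_ge0; lra.
      have FB : forall x, 0 <= x -> x <= b -> `|F' x| <= c * d.
        move=> x x0 xb; have [->|xn0] := eqVneq x 0.
          by rewrite F0 normr0; apply: mulr_ge0; lra.
        have xp : 0 < x by rewrite lt_def xn0 x0.
        apply: (le_trans (hd x xp ltac:(lra))); apply: ler_wpM2l; lra.
      move=> x y h1 h2 h3 h4; rewrite !Gn !norm2_smul // (ger0_norm h1) (ger0_norm h3).
      case/orP: (le_total x y) => xy.
        rewrite distrC [`|x - y|]distrC (ger0_norm (x := y - x)); last by rewrite subr_ge0.
        exact: (F_lip hF FB).
      rewrite (ger0_norm (x := x - y)); last by rewrite subr_ge0.
      exact: (F_lip hF FB).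
  + exists set0; split; first exact: negligible_set0.
    move=> t t0 td _.
    have pos : \forall u \near t, 0 < u.
      apply/nbhs_ballP; exists t => // u; rewrite /ball /= => h.
      move: h; rewrite ltr_norml => /andP[_ h]; lra.
    have dth := hth t t0 td.
    have dc := is_derive_comp1 dth (is_derive_cos (th t)).
    have ds := is_derive_comp1 dth (is_derive_sin (th t)).
    have d1 := @dl R t s.1; have d2 := @dl R t s.2.
    have dA := dsub (dprod dc d1) (dprod ds d2).
    have dB := dadd (dprod ds d1) (dprod dc d2).
    have dZ := halfline_is_derive hF t0.
    have eX : \forall u \near t,
        cos (th u) * (s.1 * u) - sin (th u) * (s.2 * u) = (G (smul2 u s)).1.
      near=> u; have u0 : 0 < u by near: u; exact: pos.
      by rewrite Gsm ?ltW //= /smul2 /=; ring.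
    have eY : \forall u \near t,
        sin (th u) * (s.1 * u) + cos (th u) * (s.2 * u) = (G (smul2 u s)).2.
      near=> u; have u0 : 0 < u by near: u; exact: pos.
      by rewrite Gsm ?ltW //= /smul2 /=; ring.
    have eZ : \forall u \near t, F u = F (norm2 (G (smul2 u s))).
      near=> u; have u0 : 0 < u by near: u; exact: pos.
      by rewrite Gn norm2_smul // gtr0_norm.
    have [hX DX] := near_eq_is_derive eX dA.
    have [hY DY] := near_eq_is_derive eY dB.
    have [hZ DZ] := near_eq_is_derive eZ dZ.
    split => //.
    rewrite !derive1E DX DY DZ Gsm ?ltW //= /smul2 /=.
    set C := cos (th t); set S := sin (th t); set g := 2 * k t / t ^+ 2.
    have cs : C ^+ 2 + S ^+ 2 = 1 by exact: cos2Dsin2.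
    have E : forall a : R, a + 2^-1 * (C * s.1 + s.1 * t * (- S * g) - (S * s.2 + s.2 * t * (C * g))) *
        (S * (t * s.1) + C * (t * s.2)) - 2^-1 * (C * (t * s.1) - S * (t * s.2)) *
        (S * s.1 + s.1 * t * (C * g) + (C * s.2 + s.2 * t * (- S * g)))
        = a - 2^-1 * t ^+ 2 * g * ((C ^+ 2 + S ^+ 2) * (s.1 ^+ 2 + s.2 ^+ 2)).
      by move=> a; ring.
    rewrite E cs hs2 mulr1 /g /k (gtr0_norm t0).
    by field; rewrite gt_eqF.
- by move=> s s' t hs hs' t0 tT; rewrite !Gn !norm2_smul.
Unshelve. all: by end_near. Qed.
End S5.


Theorem lemma5p3 (R : realType) :
  exists Lf : \bar R -> R,
  forall F F' : R -> R,
    C11_halfline F F' ->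
    F' 0 = 0 ->
    let M : \bar R :=
      maxe 1%E (limf_esup (fun t : R => (`|F' t| / t)%:E) (0 : R)^'+) in
    let L := Lf M in
    1 < L /\
    exists T : R, 0 < T /\
    exists G : R * R -> R * R,
      [/\ (forall p, norm2 p < T -> norm2 (G p) < T),
          (forall p q, norm2 p < T -> norm2 q < T ->
             L^-1 * norm2 (sub2 p q) <= norm2 (sub2 (G p) (G q)) /\
             norm2 (sub2 (G p) (G q)) <= L * norm2 (sub2 p q)),
          G (0, 0) = (0, 0),
          (forall s, norm2 s = 1 ->
             horizontal_on (fun t => (G (smul2 t s)).1) (fun t => (G (smul2 t s)).2)
                           (fun t => F (norm2 (G (smul2 t s)))) T) &
          (forall s s' t, norm2 s = 1 -> norm2 s' = 1 -> 0 <= t -> t < T ->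
             norm2 (G (smul2 t s)) = norm2 (G (smul2 t s')))].
Proof. exact: main. Qed.
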